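(* Let $X$ be an uncertain variable on $\Omega$ with finite range, let $\epsilon>0$, and let $\mathfrak{M}$ be a map defined on $[\![X]\!]$ with finite image such that $Y:=\mathfrak{M}\circ X$ is $\epsilon$-identifiable, i.e., $|[\![X\mid Y(\omega)=y]\!]|\geq |[\![X]\!]|\,2^{-\epsilon}$ for all $y\in[\![Y]\!]$. Then $$\mathcal{L}_\star(X\rightarrow Y)\leq \log_2\big(|[\![X]\!]|(1-2^{-\epsilon}) + 1\big).$$
   Context: Let $\Omega$ be a set. An uncertain variable (uv) is a map $X:\Omega\to\mathbb{X}$ into some set; all uvs considered have finite ranges. The range of $X$ is $[\![X]\!]:=\{X(\omega):\omega\in\Omega\}$; the conditional range is $[\![X\mid Y(\omega)=y]\!]:=\{X(\omega):\omega\in\Omega,\ Y(\omega)=y\}$. The non-stochastic brute-force guessing leakage from a uv $U$ to a uv $Y$ is $$\mathcal{L}(U\rightarrow Y):=\log_2\left(\frac{|[\![U]\!]|}{\min_{y\in[\![Y]\!]}|[\![U\mid Y(\omega)=y]\!]|}\right).$$ The maximal non-stochastic brute-force leakage from $X$ to $Y$ is $$\mathcal{L}_\star(X\rightarrow Y):=\sup_{g}\ \mathcal{L}(g\circ X\rightarrow Y),$$ where the supremum ranges over all finite sets $\mathcal{U}$ and all functions $g:[\![X]\!]\to\mathcal{U}$. *)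

(* Defs.v *)
From HB Require Import structures.
From mathcomp Require Import all_boot all_order all_algebra.
From mathcomp Require Import finmap.
From mathcomp Require Import all_classical all_reals all_analysis.
Set Implicit Arguments. Unset Strict Implicit. Unset Printing Implicit Defensive.
Import Order.TTheory GRing.Theory Num.Theory.
Local Open Scope classical_set_scope.
Local Open Scope ring_scope.

Definition log2 {R : realType} (x : R) : R := ln x / ln 2.

Definition card_set {T : choiceType} (A : set T) : nat := (#|` fset_set A|)%fset.

Definition urange {Omega : Type} {T : Type} (X : Omega -> T) : set T := range X.

Definition ucrange {Omega : Type} {T V : Type} (X : Omega -> T) (Y : Omega -> V)
  (y : V) : set T := [set X w | w in [set w | Y w = y]].

(* non-stochastic brute-force guessing leakage L(U -> Y);
   the minimum over the finite set [[Y]] is taken as the infimum of that set. *)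
Definition nsbf_leakage {R : realType} {Omega : Type} {U : choiceType} {V : Type}
  (Uv : Omega -> U) (Y : Omega -> V) : R :=
  log2 ((card_set (urange Uv))%:R /
        inf [set (card_set (ucrange Uv Y y))%:R | y in urange Y]).

(* maximal non-stochastic brute-force leakage L_*(X -> Y):
   supremum over all finite sets (finTypes) Uset and all g : [[X]] -> Uset
   (g is given as a function on the codomain of X; only its values on [[X]]
   matter). *)
Definition max_nsbf_leakage {R : realType} {Omega : Type} {T : choiceType} {V : Type}
  (X : Omega -> T) (Y : Omega -> V) : \bar R :=
  ereal_sup [set r%:E | r in
    [set r : R | exists (Uset : finType) (g : T -> Uset),
                   r = nsbf_leakage (g \o X) Y]].

(* Main.v *)
Require Import Defs.
From HB Require Import structures.
From mathcomp Require Import all_boot all_order all_algebra.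
From mathcomp Require Import finmap.
From mathcomp Require Import all_classical all_reals all_analysis.
From mathcomp Require Import lra.
Import Order.TTheory GRing.Theory Num.Theory.
Local Open Scope classical_set_scope.
Local Open Scope ring_scope.

Lemma key_card (T U : choiceType) (f : T -> U) (A B : {fset T}) :
  (B `<=` A)%fset -> (#|` (f @` A)%fset| <= #|` (f @` B)%fset| + (#|` A| - #|` B|))%N.
Proof. Local Open Scope fset_scope.
move=> BA.
have -> : A = (B `|` (A `\` B))%fset.
  apply/fsetP=> x; rewrite !inE; case: (boolP (x \in B)) => //= xB.
  by rewrite (fsubsetP BA).
rewrite imfsetU.
apply: (leq_trans (leq_card_fsetU _ _)).
rewrite leq_add2l.
have -> : (#|` B `|` (A `\` B)| - #|` B| = #|` A `\` B|)%N.
  rewrite -cardfsDS ?fsubsetUl //; congr #|` _|.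
  by apply/fsetP=> x; rewrite !inE; case: (x \in B).
exact: leq_imfset_card.
Qed.
Local Close Scope fset_scope.
Local Open Scope classical_set_scope.
Local Open Scope ring_scope.

Theorem mainTheorem7 (R : realType) (Omega : Type) (T V : choiceType)
  (X : Omega -> T) (M : T -> V) (eps : R) :
  inhabited Omega ->
  finite_set (urange X) ->
  0 < eps ->
  finite_set (M @` urange X) ->
  (forall y, urange (M \o X) y ->
     (card_set (urange X))%:R * powR 2 (- eps) <=
       (card_set (ucrange X (M \o X) y))%:R :> R) ->
  (max_nsbf_leakage X (M \o X) <=
     (log2 ((card_set (urange X))%:R * (1 - powR 2 (- eps)) + 1))%:E)%E.
Proof.
move=> [w0] finX eps0 _ Hid.
set N := card_set (urange X).
set c : R := N%:R * (1 - powR 2 (- eps)).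
have p1 : powR 2 (- eps) <= 1.
  have := @ler_powR R 2 ltac:(lra) (- eps) 0; rewrite powRr0; apply; lra.
have c0 : 0 <= c by rewrite /c mulr_ge0 // subr_ge0.
apply: ge_ereal_sup => _ [r [U [g ->]] <-]; rewrite lee_fin.
set Y := M \o X.
have finA y : finite_set (ucrange X Y y).
  by apply: sub_finite_set finX => _ [w _ <-]; exists w.
have eR : urange (g \o X) = g @` urange X.
  by rewrite /urange image_comp.
have eA y : ucrange (g \o X) Y y = g @` ucrange X Y y.
  by rewrite /ucrange image_comp.
set n := card_set (urange (g \o X)).
set E := [set (card_set (ucrange (g \o X) Y y))%:R | y in urange Y] : set R.
have En : nonempty E by exists (card_set (ucrange (g \o X) Y (Y w0)))%:R; exists (Y w0) => //; exists w0.
have lb1 : lbound E 1.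
  move=> _ [y [w _ <-] <-]; rewrite ler1n /card_set eA fset_set_image //.
  rewrite cardfs_gt0; apply/eqP => /fsetP/(_ (g (X w))).
  rewrite inE; move/negbT/negP; apply; apply/imfsetP; exists (X w) => //.
  by rewrite in_fset_set // inE; exists w.
have lb2 : lbound E (n%:R - c).
  move=> _ [y Yy <-].
  have H := Hid y Yy.
  have sub : (fset_set (ucrange X Y y) `<=` fset_set (urange X))%fset.
    by rewrite -fset_set_sub // => _ [w _ <-]; exists w.
  have := @key_card _ _ g _ _ sub.
  rewrite /n /card_set eA eR !fset_set_image //.
  move: H; rewrite /N /card_set => H.
  have le := fsubset_leq_card sub.
  rewrite -(ler_nat R) natrD natrB // => K.
  rewrite /c; lra.
have i1 : 1 <= inf E by apply: lb_le_inf.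
have i2 : n%:R - c <= inf E by apply: lb_le_inf.
have n1 : (1 <= n)%N.
  rewrite /n /card_set eR fset_set_image // cardfs_gt0.
  apply/eqP => /fsetP/(_ (g (X w0))).
  rewrite inE; move/negbT/negP; apply; apply/imfsetP; exists (X w0) => //.
  by rewrite in_fset_set // inE; exists w0.
have n1R : 1 <= n%:R :> R by rewrite ler1n.
rewrite /nsbf_leakage -/n -/E /log2.
have ln2 : 0 < ln (2 : R) by apply: ln_gt0; lra.
rewrite ler_pM2r ?invr_gt0 //.
rewrite ler_ln ?posrE; last 2 first.
- by apply: divr_gt0; lra.
- lra.
rewrite ler_pdivrMr; last lra.
rewrite -/c; nra.
Qed.
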